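(* $\Delta[\Delta,\Delta]\Delta+\mathbb F1=\langle A,B\rangle\cap\langle B,C\rangle\cap\langle A,C\rangle$.
   Context: Let $\mathbb F$ be a field and fix a nonzero $q\in\mathbb F$ with $q^4\neq 1$. The universal Askey--Wilson algebra $\Delta$ is the associative $\mathbb F$-algebra with 1 with generators $A,B,C$ subject to the relations that each of $A+\frac{qBC-q^{-1}CB}{q^2-q^{-2}}$, $B+\frac{qCA-q^{-1}AC}{q^2-q^{-2}}$, $C+\frac{qAB-q^{-1}BA}{q^2-q^{-2}}$ is central. $[\Delta,\Delta]={\rm Span}\{uv-vu:u,v\in\Delta\}$, so $\Delta[\Delta,\Delta]\Delta$ is the 2-sided ideal generated by it. For $\mathcal S\subseteq\Delta$, $\langle\mathcal S\rangle$ denotes the $\mathbb F$-subalgebra of $\Delta$ generated by $\mathcal S$. *)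

(* Defs.v *)
From HB Require Import structures.
From mathcomp Require Import all_boot all_order all_algebra.
Set Implicit Arguments. Unset Strict Implicit. Unset Printing Implicit Defensive.
Import GRing.Theory.
Local Open Scope ring_scope.

Definition central (F : fieldType) (D : algType F) (z : D) : Prop :=
  forall y : D, z * y = y * z.

Definition AW_rel (F : fieldType) (q : F) (D : algType F) (a b c : D) : Prop :=
  let d := q ^+ 2 - q ^- 2 in
  [/\ central (a + d^-1 *: (q *: (b * c) - q^-1 *: (c * b))),
      central (b + d^-1 *: (q *: (c * a) - q^-1 *: (a * c)))
    & central (c + d^-1 *: (q *: (a * b) - q^-1 *: (b * a)))].

Definition alg_hom (F : fieldType) (D R : algType F) (f : D -> R) : Prop :=
  [/\ forall x y, f (x + y) = f x + f y,
      forall x y, f (x * y) = f x * f y,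
      f 1 = 1
    & forall (k : F) x, f (k *: x) = k *: f x].

Definition is_universal_AW (F : fieldType) (q : F) (D : algType F) (A B C : D)
  : Prop :=
  AW_rel q A B C /\
  forall (R : algType F) (a b c : R), AW_rel q a b c ->
    (exists f : D -> R, alg_hom f /\ f A = a /\ f B = b /\ f C = c) /\
    (forall f g : D -> R, alg_hom f -> alg_hom g ->
       f A = g A -> f B = g B -> f C = g C -> forall x, f x = g x).

Inductive gen2 (F : fieldType) (D : algType F) (u v : D) : D -> Prop :=
  | gen2_l : gen2 u v u
  | gen2_r : gen2 u v v
  | gen2_1 : gen2 u v 1
  | gen2_add x y : gen2 u v x -> gen2 u v y -> gen2 u v (x + y)
  | gen2_mul x y : gen2 u v x -> gen2 u v y -> gen2 u v (x * y)
  | gen2_scale (k : F) x : gen2 u v x -> gen2 u v (k *: x).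

Inductive comm_ideal (F : fieldType) (D : algType F) : D -> Prop :=
  | ci_comm u v : comm_ideal (u * v - v * u)
  | ci_0 : comm_ideal 0
  | ci_add x y : comm_ideal x -> comm_ideal y -> comm_ideal (x + y)
  | ci_scale (k : F) x : comm_ideal x -> comm_ideal (k *: x)
  | ci_mull z x : comm_ideal x -> comm_ideal (z * x)
  | ci_mulr z x : comm_ideal x -> comm_ideal (x * z).

(* Main.v *)
Require Import Defs.
From HB Require Import structures.
From mathcomp Require Import all_boot all_order all_algebra.
From mathcomp Require Import generic_quotient ring_quotient.
From Stdlib Require Import ClassicalEpsilon.
Set Implicit Arguments. Unset Strict Implicit. Unset Printing Implicit Defensive.
Import GRing.Theory.
Local Open Scope ring_scope.
Local Open Scope quotient_scope.

Inductive gen3 (F : fieldType) (D : algType F) (u v w : D) : D -> Prop :=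
  | gen3_u : gen3 u v w u
  | gen3_v : gen3 u v w v
  | gen3_w : gen3 u v w w
  | gen3_1 : gen3 u v w 1
  | gen3_add x y : gen3 u v w x -> gen3 u v w y -> gen3 u v w (x + y)
  | gen3_mul x y : gen3 u v w x -> gen3 u v w y -> gen3 u v w (x * y)
  | gen3_scale (k : F) x : gen3 u v w x -> gen3 u v w (k *: x).

Section Gen.
Variables (F : fieldType) (q : F) (D : algType F) (A B C : D).
Hypothesis HU : is_universal_AW q A B C.

Definition g3B (x : D) : bool :=
  if excluded_middle_informative (gen3 A B C x) then true else false.

Lemma g3BP x : reflect (gen3 A B C x) (g3B x).
Proof. rewrite /g3B; case: excluded_middle_informative => h; by constructor. Qed.

Lemma g3_closed : GRing.subsemialg_closed g3B.
Proof.
split.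
- by apply/g3BP; apply: gen3_1.
- split; first by apply/g3BP; rewrite -(scale0r 1); apply/gen3_scale/gen3_1.
  by move=> u v /g3BP hu /g3BP hv; apply/g3BP; apply: gen3_add.
- by move=> k u /g3BP hu; apply/g3BP; apply: gen3_scale.
- by move=> u v /g3BP hu /g3BP hv; apply/g3BP; apply: gen3_mul.
Qed.

Record S3 := MkS3 { s3val : D; _ : g3B s3val }.
HB.instance Definition _ := [isSub for s3val].
HB.instance Definition _ := [Choice of S3 by <:].
HB.instance Definition _ := GRing.SubChoice_isSubAlgebra.Build F D g3B S3 g3_closed.

Lemma val_hom : alg_hom (fun x : S3 => val x).
Proof. by split=> [x y|x y||k x] /=; rewrite ?rmorphD ?rmorphM ?rmorph1 ?linearZ. Qed.

Lemma val_inj3 : injective (fun x : S3 => val x).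
Proof. exact: val_inj. Qed.

Lemma hom_comp (R1 R2 : algType F) (f : D -> R1) (g : R1 -> R2) :
  alg_hom f -> alg_hom g -> alg_hom (fun x => g (f x)).
Proof.
case=> f1 f2 f3 f4 [g1 g2 g3 g4].
by split=> [x y|x y||k x]; rewrite ?f1 ?f2 ?f3 ?f4 ?g1 ?g2 ?g3 ?g4.
Qed.

Lemma hom_id : alg_hom (fun x : D => x).
Proof. by []. Qed.

Lemma all_gen3 x : gen3 A B C x.
Proof.
have gA : g3B A by apply/g3BP; apply: gen3_u.
have gB : g3B B by apply/g3BP; apply: gen3_v.
have gC : g3B C by apply/g3BP; apply: gen3_w.
pose A' := MkS3 gA. pose B' := MkS3 gB. pose C' := MkS3 gC.
case: HU => hAW Hu.
have hAW' : AW_rel q A' B' C'.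
  move: hAW; rewrite /AW_rel => -[ha hb hc].
  split=> y; apply: val_inj; rewrite /= !(rmorphD, rmorphB, rmorphM, linearZ) /= ?scalerN.
  - exact: ha.
  - exact: hb.
  - exact: hc.
case: (Hu _ _ _ _ hAW') => -[f [hf [fA [fB fC]]]] _.
case: (Hu _ _ _ _ hAW) => _ uniq.
have h := uniq (fun x => s3val (f x)) (fun x => x) (hom_comp hf val_hom)
  hom_id _ _ _ x.
rewrite -h; last by rewrite fC.
  - by apply/g3BP; case: (f x).
  - by rewrite fA.
  - by rewrite fB.
Qed.
End Gen.
Lemma gen2_sym (F : fieldType) (D : algType F) (u v x : D) : gen2 u v x -> gen2 v u x.
Proof. elim=> *; by constructor. Qed.

Lemma lin_solve (F : fieldType) (V : lmodType F) (G P R : V) (d q : F) :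
  d != 0 -> q - q^-1 != 0 ->
  d^-1*:(q*:(G - d^-1*:P) - q^-1*:(G - d^-1*:R)) = 0 ->
  G = ((q - q^-1)^-1 * d^-1) *: (q*:P - q^-1*:R).
Proof.
move=> hd hq h.
have h1 : q*:(G - d^-1*:P) - q^-1*:(G - d^-1*:R) = 0.
  by move: h => /eqP; rewrite scaler_eq0 invr_eq0 (negbTE hd) /= => /eqP.
have h2 : (q - q^-1) *: G = d^-1 *: (q*:P - q^-1*:R).
  apply/eqP; rewrite -subr_eq0; apply/eqP; rewrite -h1.
  rewrite !scalerBr !scalerBl !scalerA !opprB.
  rewrite [d^-1 * q]mulrC [d^-1 * q^-1]mulrC.
  rewrite addrACA [in RHS]addrACA; congr (_ + _); exact: addrC.
by rewrite -scalerA -h2 scalerA mulVf // scale1r.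
Qed.

Section Fwd.
Variables (F : fieldType) (q : F) (D : algType F) (A B C : D).
Hypothesis hq0 : q != 0.
Hypothesis hq4 : q ^+ 4 != 1.
Hypothesis HU : is_universal_AW q A B C.

Inductive Kab : D -> Prop :=
 | k_base : Kab (A*B - B*A)
 | k_0 : Kab 0
 | k_add x y : Kab x -> Kab y -> Kab (x+y)
 | k_scale (k:F) x : Kab x -> Kab (k*:x)
 | k_mull s x : gen2 A B s -> Kab x -> Kab (s*x)
 | k_mulr s x : gen2 A B s -> Kab x -> Kab (x*s).

Lemma Kab_gen x : Kab x -> gen2 A B x.
Proof.
elim=> {x} [|||k x _ ih|s x hs _ ih|s x hs _ ih].
- rewrite -scaleN1r; apply: gen2_add; first by apply: gen2_mul; constructor.
  by apply: gen2_scale; apply: gen2_mul; constructor.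
- by rewrite -(scale0r 1); apply/gen2_scale/gen2_1.
- by move=> x y _ ? _ ?; apply: gen2_add.
- exact: gen2_scale.
- exact: gen2_mul.
- exact: gen2_mul.
Qed.

Lemma Kab_opp x : Kab x -> Kab (- x).
Proof. by move=> h; rewrite -scaleN1r; apply: k_scale. Qed.

Lemma Kab_sub x y : Kab x -> Kab y -> Kab (x - y).
Proof. by move=> hx hy; apply: k_add => //; apply: Kab_opp. Qed.

Definition comm (x y : D) := x * y - y * x.

Lemma commL x1 x2 y : comm (x1 * x2) y = x1 * comm x2 y + comm x1 y * x2.
Proof.
rewrite /comm mulrBr mulrBl !mulrA addrA; congr (_ - _).
by rewrite addrNK.
Qed.

Lemma commR x y1 y2 : comm x (y1 * y2) = comm x y1 * y2 + y1 * comm x y2.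
Proof.
rewrite /comm mulrBr mulrBl !mulrA addrA; congr (_ - _).
by rewrite addrNK.
Qed.

Lemma commDl x1 x2 y : comm (x1 + x2) y = comm x1 y + comm x2 y.
Proof. by rewrite /comm mulrDl mulrDr opprD addrACA. Qed.

Lemma commDr x y1 y2 : comm x (y1 + y2) = comm x y1 + comm x y2.
Proof. by rewrite /comm mulrDl mulrDr opprD addrACA. Qed.

Lemma commZl k x y : comm (k *: x) y = k *: comm x y.
Proof. by rewrite /comm -scalerAl -scalerAr scalerBr. Qed.

Lemma commZr k x y : comm x (k *: y) = k *: comm x y.
Proof. by rewrite /comm -scalerAl -scalerAr scalerBr. Qed.

Lemma comm1l y : comm 1 y = 0.
Proof. by rewrite /comm mul1r mulr1 subrr. Qed.

Lemma comm1r y : comm y 1 = 0.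
Proof. by rewrite /comm mul1r mulr1 subrr. Qed.

Lemma commxx y : comm y y = 0.
Proof. by rewrite /comm subrr. Qed.

Lemma commN x y : comm y x = - comm x y.
Proof. by rewrite /comm opprB. Qed.

Lemma L1g g t : (g = A \/ g = B) -> gen2 A B t -> Kab (comm g t).
Proof.
move=> hg; elim=> {t} [|||t1 t2 _ i1 _ i2|t1 t2 h1 i1 h2 i2|k t _ i].
- case: hg => ->; first by rewrite commxx; apply: k_0.
  by rewrite commN; apply/Kab_opp/k_base.
- case: hg => ->; last by rewrite commxx; apply: k_0.
  exact: k_base.
- by rewrite comm1r; apply: k_0.
- by rewrite commDr; apply: k_add.
- by rewrite commR; apply: k_add; [apply: k_mulr|apply: k_mull].
- by rewrite commZr; apply: k_scale.
Qed.

Lemma L1 s t : gen2 A B s -> gen2 A B t -> Kab (comm s t).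
Proof.
move=> hs ht; elim: hs => {s} [|||s1 s2 _ i1 _ i2|s1 s2 h1 i1 h2 i2|k s _ i].
- by apply: L1g => //; left.
- by apply: L1g => //; right.
- by rewrite comm1l; apply: k_0.
- by rewrite commDl; apply: k_add.
- by rewrite commL; apply: k_add; [apply: k_mull|apply: k_mulr].
- by rewrite commZl; apply: k_scale.
Qed.


Lemma commNl x y : comm (- x) y = - comm x y.
Proof. by rewrite -scaleN1r commZl scaleN1r. Qed.

Lemma commBl x1 x2 y : comm (x1 - x2) y = comm x1 y - comm x2 y.
Proof. by rewrite commDl commNl. Qed.

Definition dd := q ^+ 2 - q ^- 2.
Definition EE := q *: (A * B) - q^-1 *: (B * A).
Definition gam := C + dd^-1 *: EE.

Lemma hd : dd != 0.
Proof.
apply/eqP => h; move/eqP: hq4; apply.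
have e : q ^+ 2 = q ^- 2 by apply/eqP; rewrite -subr_eq0 -/dd h.
by rewrite (_ : 4 = 2 + 2)%N // exprD {1}e mulVf // expf_neq0.
Qed.

Lemma hqq : q - q^-1 != 0.
Proof.
apply/eqP => h; move/eqP: hq4; apply.
have e : q = q^-1 by apply/eqP; rewrite -subr_eq0 h.
have e2 : q ^+ 2 = 1 by rewrite expr2 {1}e mulVf.
by rewrite (_ : 4 = 2 * 2)%N // exprM e2 expr1n.
Qed.

Lemma hgam y : gam * y = y * gam.
Proof. by case: HU => -[_ _ hc] _; exact: hc. Qed.

Lemma halpha y : (A + dd^-1 *: (q *: (B * C) - q^-1 *: (C * B))) * y =
   y * (A + dd^-1 *: (q *: (B * C) - q^-1 *: (C * B))).
Proof. by case: HU => -[ha _ _] _; exact: ha. Qed.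

Lemma gE : gen2 A B EE.
Proof.
rewrite /EE -scaleN1r scalerA; apply: gen2_add; apply: gen2_scale;
  by apply: gen2_mul; constructor.
Qed.

Lemma eC : C = gam - dd^-1 *: EE.
Proof. by rewrite /gam addrK. Qed.

Lemma Kgam : Kab (gam * comm A B).
Proof.
pose al := A + dd^-1 *: (q *: (B * C) - q^-1 *: (C * B)).
have h0 : comm al A = 0 by rewrite /comm halpha subrr.
have eBC : B * C = gam * B - dd^-1 *: (B * EE).
  by rewrite eC mulrBr -hgam scalerAr.
have eCB : C * B = gam * B - dd^-1 *: (EE * B).
  by rewrite eC mulrBl scalerAl.
have key : comm al A = dd^-1 *: (q *: (comm (gam*B) A - dd^-1 *: comm (B*EE) A)
   - q^-1 *: (comm (gam*B) A - dd^-1 *: comm (EE*B) A)).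
  rewrite /al commDl commxx add0r commZl; congr (_ *: _).
  by rewrite commBl !commZl eBC eCB !commBl !commZl.
have := lin_solve hd hqq (etrans (esym key) h0) => eG.
have -> : gam * comm A B = - comm (gam * B) A.
  rewrite commL (_ : comm gam A = 0) ?mul0r ?addr0; last by rewrite /comm hgam subrr.
  by rewrite [comm B A]commN mulrN opprK.
have g1 : gen2 A B (B * EE) by apply: gen2_mul; [constructor|exact: gE].
have g2 : gen2 A B (EE * B) by apply: gen2_mul; [exact: gE|constructor].
have gA : gen2 A B A by constructor.
rewrite eG; apply/Kab_opp/k_scale/Kab_sub; apply: k_scale; exact: L1.
Qed.

Lemma Kab_gam x : Kab x -> Kab (gam * x).
Proof.
elim=> {x} [|||k x _ ih|s x hs _ ih|s x hs _ ih].
- exact: Kgam.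
- by rewrite mulr0; apply: k_0.
- by move=> x y _ ? _ ?; rewrite mulrDr; apply: k_add.
- by rewrite -scalerAr; apply: k_scale.
- by rewrite mulrA hgam -mulrA; apply: k_mull.
- by rewrite mulrA; apply: k_mulr.
Qed.

Lemma Kab_C x : Kab x -> Kab (C * x) /\ Kab (x * C).
Proof.
move=> h; rewrite eC mulrBl mulrBr -scalerAl -scalerAr; split; apply: Kab_sub.
- exact: Kab_gam.
- by apply/k_scale/k_mull => //; apply: gE.
- by rewrite -hgam; apply: Kab_gam.
- by apply/k_scale/k_mulr => //; apply: gE.
Qed.

Lemma L2 y : gen3 A B C y -> forall x, Kab x -> Kab (y * x) /\ Kab (x * y).
Proof.
elim=> {y} [||||y1 y2 _ i1 _ i2|y1 y2 _ i1 _ i2|k y _ i] x hx.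
- by split; [apply: k_mull|apply: k_mulr] => //; constructor.
- by split; [apply: k_mull|apply: k_mulr] => //; constructor.
- exact: Kab_C.
- by rewrite mul1r mulr1.
- by case: (i1 x hx) => a b; case: (i2 x hx) => c e; rewrite mulrDl mulrDr;
    split; apply: k_add.
- split.
  + by rewrite -mulrA; exact: (proj1 (i1 _ (proj1 (i2 x hx)))).
  + by rewrite mulrA; exact: (proj2 (i2 _ (proj2 (i1 x hx)))).
- by case: (i x hx) => a b; rewrite -scalerAl -scalerAr; split; apply: k_scale.
Qed.

Lemma commC u : comm u C = - (dd^-1 *: comm u EE).
Proof.
rewrite eC /comm mulrBr mulrBl -scalerAl -scalerAr hgam.
by rewrite opprB addrC addrA addrNK scalerBr opprB.
Qed.

Lemma fix_u u : Kab (comm u A) -> Kab (comm u B) -> Kab (comm u C) ->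
  forall v, gen3 A B C v -> Kab (comm u v).
Proof.
move=> hA hB hC v; elim=> {v} [||||v1 v2 _ i1 _ i2|v1 v2 h1 i1 h2 i2|k v _ i] //.
- by rewrite comm1r; apply: k_0.
- by rewrite commDr; apply: k_add.
- by rewrite commR; apply: k_add; [apply: (proj2 (L2 h2 i1))|apply: (proj1 (L2 h1 i2))].
- by rewrite commZr; apply: k_scale.
Qed.

Lemma gen2_gen3 s : gen2 A B s -> gen3 A B C s.
Proof. elim=> *; by constructor. Qed.

Lemma base_AB g : (g = A \/ g = B) -> forall v, gen3 A B C v -> Kab (comm g v).
Proof.
move=> hg; have g2 : gen2 A B g by case: hg => ->; constructor.
apply: fix_u; try (apply: L1 => //; constructor).
by rewrite commC; apply/Kab_opp/k_scale/L1 => //; apply: gE.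
Qed.

Lemma base_C v : gen3 A B C v -> Kab (comm C v).
Proof.
apply: fix_u.
- by rewrite commN; apply: Kab_opp; apply: base_AB; [left|constructor].
- by rewrite commN; apply: Kab_opp; apply: base_AB; [right|constructor].
- by rewrite commxx; apply: k_0.
Qed.

Lemma L3 u v : gen3 A B C u -> gen3 A B C v -> Kab (comm u v).
Proof.
move=> hu hv; elim: hu => {u} [||||u1 u2 _ i1 _ i2|u1 u2 h1 i1 h2 i2|k u _ i].
- by apply: base_AB => //; left.
- by apply: base_AB => //; right.
- exact: base_C.
- by rewrite comm1l; apply: k_0.
- by rewrite commDl; apply: k_add.
- by rewrite commL; apply: k_add; [apply: (proj1 (L2 h1 i2))|apply: (proj2 (L2 h2 i1))].
- by rewrite commZl; apply: k_scale.
Qed.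

Lemma fwd x : comm_ideal x -> gen2 A B x.
Proof.
move=> h; apply: Kab_gen; elim: h => {x}.
- by move=> u v; apply: L3; apply: (all_gen3 (proj1 HU)) || apply: (all_gen3 HU).
- exact: k_0.
- by move=> x y _ ? _ ?; apply: k_add.
- by move=> k x _ ?; apply: k_scale.
- by move=> z x _ h; apply: (proj1 (L2 (all_gen3 HU z) h)).
- by move=> z x _ h; apply: (proj2 (L2 (all_gen3 HU z) h)).
Qed.

End Fwd.

Section HomLemmas.
Variables (F : fieldType) (D R : algType F) (f : D -> R).
Hypothesis hf : alg_hom f.

Lemma hom0 : f 0 = 0.
Proof.
case: hf => h1 _ _ _; have e := h1 0 0; rewrite addr0 in e.
by apply: (@addrI _ (f 0)); rewrite addr0 -e.
Qed.

Lemma homN x : f (- x) = - f x.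
Proof.
have h0 := hom0; case: hf => h1 _ _ _.
by apply: (@addrI _ (f x)); rewrite -h1 !subrr.
Qed.

Lemma homB x y : f (x - y) = f x - f y.
Proof. by case: hf => h1 _ _ _; rewrite h1 homN. Qed.

Lemma hom_ci (hc : forall u v : R, u * v = v * u) x : comm_ideal x -> f x = 0.
Proof.
case: hf => h1 h2 h3 h4.
elim=> {x} [u v|||k x _ ih|z x _ ih|z x _ ih].
- by rewrite homB !h2 hc subrr.
- exact: hom0.
- by move=> x y _ hx _ hy; rewrite h1 hx hy addr0.
- by rewrite h4 ih scaler0.
- by rewrite h2 ih mulr0.
- by rewrite h2 ih mul0r.
Qed.
End HomLemmas.

Lemma AW_com (F : fieldType) (q : F) (R : algType F) (a b c : R) :
  (forall u v : R, u * v = v * u) -> AW_rel q a b c.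
Proof. by move=> hc; split=> y; apply: hc. Qed.

Lemma gen2_hom (F : fieldType) (D R : algType F) (f g : D -> R) (u v x : D) :
  alg_hom f -> alg_hom g -> f u = g u -> f v = g v -> gen2 u v x -> f x = g x.
Proof.
case=> f1 f2 f3 f4 [g1 g2 g3 g4] eu ev.
by elim=> {x} [|||x y _ hx _ hy|x y _ hx _ hy|k x _ hx];
  rewrite ?f1 ?g1 ?f2 ?g2 ?f4 ?g4 ?hx ?hy ?f3 ?g3.
Qed.

Section Quot.
Variables (F : fieldType) (q : F) (D : algType F) (A B C : D).
Hypothesis HU : is_universal_AW q A B C.

Definition ciB (x : D) : bool :=
  if excluded_middle_informative (comm_ideal x) then true else false.

Lemma ciBP x : reflect (comm_ideal x) (ciB x).
Proof. rewrite /ciB; case: excluded_middle_informative => h; by constructor. Qed.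

Lemma ci_opp (x : D) : comm_ideal x -> comm_ideal (- x).
Proof. by move=> h; rewrite -scaleN1r; apply: ci_scale. Qed.

Lemma ci_sub (x y : D) : comm_ideal x -> comm_ideal y -> comm_ideal (x - y).
Proof. by move=> hx hy; apply: ci_add => //; apply: ci_opp. Qed.

Definition ciP : {pred D} := fun x => ciB x.

Lemma ciP_closed : zmod_closed ciP.
Proof.
split; first by apply/ciBP; apply: ci_0.
by move=> u v /ciBP hu /ciBP hv; apply/ciBP; apply: ci_sub.
Qed.

HB.instance Definition _ := GRing.isZmodClosed.Build D ciP ciP_closed.

Definition Q := Quotient.quot ciP.
HB.instance Definition _ : EqQuotient D (Quotient.equiv ciP) Q := EqQuotient.on Q.
HB.instance Definition _ := Choice.on Q.
HB.instance Definition _ := GRing.Zmodule.on Q.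
HB.instance Definition _ := ZmodQuotient.on Q.

Lemma eqQ (x y : D) : (x == y %[mod Q]) = ciB (x - y).
Proof. by rewrite -Quotient.idealrBE. Qed.

Lemma reprQ (x : D) : comm_ideal (x - repr (\pi_Q x)).
Proof. by apply/ciBP; rewrite -eqQ reprK. Qed.

Lemma nontriv : ~ comm_ideal (1 : D).
Proof.
move=> h.
have hc : forall u v : F^o, u * v = v * u by move=> u v; exact: mulrC.
case: HU => _ Hu.
case: (Hu _ 0 0 0 (AW_com q 0 0 0 hc)) => -[f [hf _]] _.
have := hom_ci hf hc h; case: hf => _ _ -> _ /eqP; by rewrite oner_eq0.
Qed.

Definition one : Q := lift_cst Q 1.
Definition mul := lift_op2 Q *%R.
Definition scl (k : F) := lift_op1 Q ( *:%R k).

Canonical pi_one_morph := PiConst one.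

Lemma pi_mul : {morph \pi_Q : x y / x * y >-> mul x y}.
Proof.
move=> x y; unlock mul; apply/eqP; rewrite eqQ; apply/ciBP.
have hx := reprQ x; have hy := reprQ y.
set x' := repr _ in hx *; set y' := repr _ in hy *.
have -> : x * y - x' * y' = (x - x') * y + x' * (y - y').
  by rewrite mulrBl mulrBr addrA addrNK.
by apply: ci_add; [apply: ci_mulr|apply: ci_mull].
Qed.
Canonical pi_mul_morph := PiMorph2 pi_mul.

Lemma pi_scl k : {morph \pi_Q : x / k *: x >-> scl k x}.
Proof.
move=> x; unlock scl; apply/eqP; rewrite eqQ; apply/ciBP.
by rewrite -scalerBr; apply/ci_scale/reprQ.
Qed.
Canonical pi_scl_morph k := PiMorph1 (pi_scl k).

Lemma mulqA: associative mul.
Proof. by move=> x y z; rewrite -[x]reprK -[y]reprK -[z]reprK !piE mulrA. Qed.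

Lemma mulqC: commutative mul.
Proof.
move=> x y; rewrite -[x]reprK -[y]reprK !piE; apply/eqP; rewrite eqQ.
by apply/ciBP; apply: ci_comm.
Qed.

Lemma mul1q: left_id one mul.
Proof. by move=> x; rewrite -[x]reprK !piE mul1r. Qed.

Lemma mulq_addl: left_distributive mul +%R.
Proof. by move=> x y z; rewrite -[x]reprK -[y]reprK -[z]reprK !piE mulrDl. Qed.

Lemma sclAl0 a (u v : Q) : scl a (mul u v) = mul (scl a u) v.
Proof. by rewrite -[u]reprK -[v]reprK !piE scalerAl. Qed.

Lemma sclA a b v : scl a (scl b v) = scl (a * b) v.
Proof. by rewrite -[v]reprK !piE scalerA. Qed.
Lemma scl1 : left_id 1 scl.
Proof. by move=> v; rewrite -[v]reprK !piE scale1r. Qed.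
Lemma sclDr : right_distributive scl +%R.
Proof. by move=> a u v; rewrite -[u]reprK -[v]reprK !piE scalerDr. Qed.
Lemma sclDl v : {morph scl^~ v : a b / a + b}.
Proof. by move=> a b; rewrite -[v]reprK !piE scalerDl. Qed.

Lemma nonzero1q: one != 0.
Proof. by rewrite piE Quotient.equivE subr0; apply/ciBP; exact: nontriv. Qed.

HB.instance Definition _ := GRing.Zmodule_isComNzRing.Build Q
  mulqA mulqC mul1q mulq_addl nonzero1q.

HB.instance Definition _ := GRing.Zmodule_isLmodule.Build F Q sclA scl1 sclDr sclDl.

Lemma sclAl a (u v : Q) : a *: (u * v) = (a *: u) * v.
Proof.
have sclE (b : F) (x : Q) : b *: x = scl b x by [].
exact: sclAl0.
Qed.

HB.instance Definition _ := GRing.Lmodule_isLalgebra.Build F Q sclAl.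
HB.instance Definition _ := GRing.Lalgebra_isComAlgebra.Build F Q.

Lemma pi_hom : alg_hom (\pi_Q : D -> Q).
Proof.
split=> [x y|x y||k x].
- exact: pi_addr.
- exact: pi_mul.
- by have e : (1 : Q) = one by []; rewrite e /one -lock.
- exact: pi_scl.
Qed.


Lemma alg_hom_A : alg_hom (fun k : F^o => (k : F)%:A : Q).
Proof.
split=> [a b|a b||k a] /=.
- by rewrite scalerDl.
- by rewrite -scalerAl mul1r scalerA.
- by rewrite scale1r.
- by rewrite scalerA.
Qed.

Lemma bwd x : gen2 A B x -> gen2 B C x -> gen2 A C x ->
  exists k : F, comm_ideal (x - k%:A).
Proof.
move=> hAB hBC hAC.
have hc : forall u v : Q, u * v = v * u by move=> u v; exact: mulrC.
have hcF : forall u v : F^o, u * v = v * u by move=> u v; exact: mulrC.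
case: HU => hAW Hu.
pose pi := (\pi_Q : D -> Q).
have hpi : alg_hom pi := pi_hom.
case: (Hu _ (pi A) (pi B) 0 (AW_com q _ _ _ hc)) => -[f2 [h2 [f2A [f2B f2C]]]] _.
case: (Hu _ (pi A) 0 0 (AW_com q _ _ _ hc)) => -[f3 [h3 [f3A [f3B f3C]]]] _.
case: (Hu _ 0 0 0 (AW_com q _ _ _ hc)) => -[f4 [h4 [f4A [f4B f4C]]]] uq.
case: (Hu _ 0 0 0 (AW_com q _ _ _ hcF)) => -[eps [he [eA [eB eC]]]] _.
have hE := hom_comp he alg_hom_A.
have e1 : pi x = f2 x := gen2_hom hpi h2 (esym f2A) (esym f2B) hAB.
have e2 : f2 x = f3 x := gen2_hom h2 h3 (etrans f2A (esym f3A)) (etrans f2C (esym f3C)) hAC.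
have e3 : f3 x = f4 x := gen2_hom h3 h4 (etrans f3B (esym f4B)) (etrans f3C (esym f4C)) hBC.
have e4 : f4 x = (eps x : F)%:A.
  apply: (uq _ _ h4 hE); by rewrite ?f4A ?f4B ?f4C ?eA ?eB ?eC scale0r.
exists (eps x); apply/ciBP; rewrite -eqQ; apply/eqP.
rewrite -/(pi x) -/(pi _) e1 e2 e3 e4.
by case: hpi => _ _ h1 hs; rewrite hs h1.
Qed.

End Quot.

Lemma AW_cyc (F : fieldType) (q : F) (D : algType F) (A B C : D) :
  AW_rel q A B C -> AW_rel q B C A.
Proof. by case=> ha hb hc; split. Qed.

Lemma univ_cyc (F : fieldType) (q : F) (D : algType F) (A B C : D) :
  is_universal_AW q A B C -> is_universal_AW q B C A.
Proof.
case=> h Hu; split; first exact: AW_cyc.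
move=> R a b c habc.
have h' : AW_rel q c a b by apply/AW_cyc/AW_cyc.
case: (Hu R c a b h') => -[f [hf [fA [fB fC]]]] uq; split.
  by exists f.
by move=> f0 g hf0 hg e1 e2 e3; apply: uq.
Qed.

Theorem theorem11p15 (F : fieldType) (q : F) (D : algType F) (A B C : D) :
  q != 0 -> q ^+ 4 != 1 -> is_universal_AW q A B C ->
  forall x : D,
    (exists (i : D) (k : F), comm_ideal i /\ x = i + k%:A) <->
    (gen2 A B x /\ gen2 B C x /\ gen2 A C x).
Proof.
move=> hq0 hq4 HU x; split.
- case=> i [k [hi ->]].
  have hk : forall u v : D, gen2 u v k%:A by move=> u v; apply/gen2_scale/gen2_1.
  have HU1 := univ_cyc HU; have HU2 := univ_cyc HU1.
  split; [|split]; apply: gen2_add => //.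
  + exact: (fwd hq0 hq4 HU).
  + exact: (fwd hq0 hq4 HU1).
  + by apply: gen2_sym; exact: (fwd hq0 hq4 HU2).
- case=> hAB [hBC hAC]; case: (bwd HU hAB hBC hAC) => k hk.
  by exists (x - k%:A), k; split => //; rewrite subrK.
Qed.
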